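(* Let $Q\in N_n$ be a subpermutation and $A\in QU_n$, and let $A^\infty$ be the Belitskii canonical form of $A$ under $B_n$-similarity. Then $A^\infty\in QU_n$, and there exist finitely many elementary $U_n$-similarity operations $\mathcal O_1,\dots,\mathcal O_m$ such that, with $A_0=A$ and $A_k=\mathcal O_k(A_{k-1})$, all of $A_0,\dots,A_m$ lie in $QU_n$ and $A_m=DA^\infty D^{-1}$ for some invertible diagonal matrix $D$ (i.e. $A_m$ is $D_n$-similar to $A^\infty$).
   Context: $\mathbb F$ is a field. $B_n$ (resp. $U_n$, $N_n$, $D_n$) denotes the set of $n\times n$ invertible upper triangular (resp. upper triangular with all diagonal entries $1$, strictly upper triangular, invertible diagonal) matrices over $\mathbb F$; $QU_n=\{QU:U\in U_n\}$; $E_{ij}$ is the matrix unit. A subpermutation is a matrix each of whose rows and columns has at most one nonzero entry, and that entry equals $1$. An elementary $U_n$-similarity operation is a map $\mathcal O_{p,q}^\lambda:N_n\to N_n$, $\mathcal O_{p,q}^\lambda(X)=(I_n+\lambda E_{pq})X(I_n+\lambda E_{pq})^{-1}$, for some $\lambda\in\mathbb F$ and $1\le p<q\le n$. Matrices $X,Y$ are $G$-similar if $Y=BXB^{-1}$ for some $B\in G$. Belitskii order on positions $\{(i,j):1\le i<j\le n\}$: $(i,j)\prec(i',j')$ iff $i>i'$, or $i=i'$ and $j<j'$. Belitskii's algorithm for $B_n$-similarity on $N_n$: given $A\in N_n$ put $A^{(0)}=A$, $G^{(0)}=B_n$. For $k=0,1,\dots$, let $(p,q)$ be the $(k+1)$th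 position in Belitskii order and look at the $(p,q)$ entries of all matrices $G^{(k)}$-similar to $A^{(k)}$: (a) if this entry is always $0$ or can take every value of $\mathbb F$, choose $A^{(k+1)}$ $G^{(k)}$-similar to $A^{(k)}$ with that entry $0$; (b) if it takes exactly the values of $\mathbb F\setminus\{0\}$, choose $A^{(k+1)}$ with that entry $1$; (c) otherwise it is a constant $\lambda\ne0$ and $A^{(k+1)}=A^{(k)}$. $G^{(k+1)}$ is the subgroup of $g\in G^{(k)}$ such that $gA^{(k+1)}g^{-1}$ agrees with $A^{(k+1)}$ in the first $k+1$ positions. The final matrix $A^\infty$ is the Belitskii canonical form of $A$. *)

(* Defs.v *)
From HB Require Import structures.
From mathcomp Require Import all_boot all_order all_algebra.
Set Implicit Arguments. Unset Strict Implicit. Unset Printing Implicit Defensive.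
Import GRing.Theory.
Local Open Scope ring_scope.

Section Defs.
Variables (F : fieldType) (n : nat).
Local Notation M := 'M[F]_n.

Definition upper_tri (A : M) : Prop := forall i j : 'I_n, (j < i)%N -> A i j = 0.
Definition strict_upper (A : M) : Prop := forall i j : 'I_n, (j <= i)%N -> A i j = 0.
Definition inB (g : M) : Prop := upper_tri g /\ g \in unitmx.
Definition inU (g : M) : Prop := upper_tri g /\ forall i, g i i = 1.
Definition inD (g : M) : Prop := (forall i j : 'I_n, i != j -> g i j = 0) /\ g \in unitmx.
Definition inQU (Q A : M) : Prop := exists U, inU U /\ A = Q *m U.

Definition subpermutation (Q : M) : Prop :=
  (forall i j, Q i j = 0 \/ Q i j = 1) /\
  (forall i j j', Q i j != 0 -> Q i j' != 0 -> j = j') /\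
  (forall i i' j, Q i j != 0 -> Q i' j != 0 -> i = i').

Definition conjm (g X : M) : M := g *m X *m invmx g.

(* elementary U_n-similarity operation O_{p,q}^lambda (requires p < q) *)
Definition elem_op (p q : 'I_n) (lam : F) (X : M) : M :=
  conjm (1%:M + lam *: delta_mx p q) X.

Definition apply_ops (ops : seq ('I_n * 'I_n * F)) (A : M) : M :=
  foldl (fun X o => elem_op o.1.1 o.1.2 o.2 X) A ops.

Definition upos : {set 'I_n * 'I_n} := [set p : 'I_n * 'I_n | (p.1 < p.2)%N].
Definition bprec (p q : 'I_n * 'I_n) : bool :=
  (q.1 < p.1)%N || ((p.1 == q.1) && (p.2 < q.2)%N).
(* number of positions strictly preceding p : p is the (rank p + 1)-th position *)
Definition brank (p : 'I_n * 'I_n) : nat := #|[set q in upos | bprec q p]|.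
Definition npos : nat := #|upos|.

Definition agree_first (k : nat) (X Y : M) : Prop :=
  forall p, p \in upos -> (brank p < k)%N -> X p.1 p.2 = Y p.1 p.2.

Fixpoint Gk (As : nat -> M) (k : nat) (g : M) : Prop :=
  match k with
  | 0 => inB g
  | k'.+1 => Gk As k' g /\ agree_first k (conjm g (As k)) (As k)
  end.

Definition orbit_vals (As : nat -> M) (k : nat) (p : 'I_n * 'I_n) (x : F) : Prop :=
  exists g, Gk As k g /\ conjm g (As k) p.1 p.2 = x.

Definition belitskii_step (As : nat -> M) (k : nat) : Prop :=
  (exists g, Gk As k g /\ As k.+1 = conjm g (As k)) /\
  forall p, p \in upos -> brank p = k ->
    let V := orbit_vals As k p in
    [/\ ((forall x, V x -> x = 0) \/ (forall x, V x)) -> As k.+1 p.1 p.2 = 0,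
        (forall x, V x <-> x != 0) -> As k.+1 p.1 p.2 = 1
      & ~ ((forall x, V x -> x = 0) \/ (forall x, V x)) ->
        ~ (forall x, V x <-> x != 0) -> As k.+1 = As k].

(* As is a run of Belitskii's algorithm on A; its final matrix As npos is A^infty *)
Definition belitskii_run (A : M) (As : nat -> M) : Prop :=
  As 0 = A /\ forall k, (k < npos)%N -> belitskii_step As k.

Definition belitskii_form (A Ainf : M) : Prop :=
  exists As, belitskii_run A As /\ Ainf = As npos.

End Defs.

(* Main.v *)
Require Import Defs.
From mathcomp Require Import all_boot all_order all_algebra.
From Stdlib Require Import ClassicalEpsilon Classical.
From mathcomp Require Import zify ring.
Set Implicit Arguments. Unset Strict Implicit. Unset Printing Implicit Defensive.
Import GRing.Theory.
Local Open Scope ring_scope.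

Section Basics.
Variables (F : fieldType) (n : nat).
Local Notation M := 'M[F]_n.
Implicit Types (X Y Z g h : M).

Lemma ord_gtF (i j : 'I_n) : (j < i)%N -> (i == j) = false.
Proof. by move=> ji; apply/eqP => E; rewrite E ltnn in ji. Qed.

Lemma ord_ltF (i j : 'I_n) : (i < j)%N -> (i == j) = false.
Proof. by move=> ji; apply/eqP => E; rewrite E ltnn in ji. Qed.

Lemma upper_mul g h : upper_tri g -> upper_tri h -> upper_tri (g *m h).
Proof.
move=> Ug Uh i j ji; rewrite mxE big1 // => k _.
case: (ltnP k i) => [ki|ik]; first by rewrite Ug ?mul0r.
by rewrite Uh ?mulr0 // (leq_trans ji ik).
Qed.

Lemma diag_mul g h i : upper_tri g -> upper_tri h -> (g *m h) i i = g i i * h i i.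
Proof.
move=> Ug Uh; rewrite mxE (bigD1 i) //= big1 ?addr0 // => k /negPf ki.
case: (ltngtP k i) => [lt|gt|/val_inj eq]; first by rewrite Ug ?mul0r.
  by rewrite Uh ?mulr0.
by rewrite eq eqxx in ki.
Qed.

Lemma det_upper g : upper_tri g -> \det g = \prod_i g i i.
Proof.
move=> Ug; rewrite -det_tr det_trig; last by apply/is_trig_mxP => i j ij; rewrite mxE Ug.
by apply: eq_bigr => i _; rewrite mxE.
Qed.

Lemma unit_upper g : upper_tri g -> (g \in unitmx) = [forall i, g i i != 0].
Proof.
move=> Ug; rewrite unitmxE det_upper // unitfE.
apply/prodf_neq0/forallP => [H i|H i _]; [exact: H | exact: H].
Qed.

Lemma inv_uniq g h : g *m h = 1%:M -> invmx g = h.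
Proof.
move=> gh; have [ug uh] := mulmx1_unit gh.
by rewrite -[invmx g]mulmx1 -gh mulmxA mulVmx // mul1mx.
Qed.

Lemma upper_inv g : inB g -> upper_tri (invmx g).
Proof.
case=> Ug ug; set h := invmx g.
have gh : g *m h = 1%:M by rewrite mulmxV.
have dg : forall i, g i i != 0 by move: ug; rewrite unit_upper // => /forallP.
suff H : forall m (i j : 'I_n), (n <= i + m)%N -> (j < i)%N -> h i j = 0.
  by move=> i j ji; apply: (H n) => //; rewrite leq_addl.
elim=> [|m IH] i j.
  by rewrite addn0 => ni; have := ltn_ord i; rewrite ltnNge ni.
move=> nim ji.
have : (g *m h) i j = 0 by rewrite gh mxE (ord_gtF ji).
rewrite mxE (bigD1 i) //= big1 ?addr0.
  by move/eqP; rewrite mulf_eq0 (negPf (dg i)) /= => /eqP.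
move=> k /negPf ki; case: (ltngtP k i) => [lt|gt|/val_inj eq].
- by rewrite Ug ?mul0r.
- by rewrite IH ?mulr0 ?(ltn_trans ji gt) // (leq_trans nim) // addnS -addSn leq_add2r.
- by rewrite eq eqxx in ki.
Qed.

Lemma diag_inv g i : inB g -> (invmx g) i i = (g i i)^-1.
Proof.
move=> Bg; have := upper_inv Bg; case: Bg => Ug ug Uh.
have dg : g i i != 0 by move: ug; rewrite unit_upper // => /forallP.
have : (g *m invmx g) i i = 1 by rewrite mulmxV // mxE eqxx.
by rewrite diag_mul // => /(congr1 (fun x => (g i i)^-1 * x)); rewrite mulr1 mulrA mulVf // mul1r.
Qed.

Lemma inB_mul g h : inB g -> inB h -> inB (g *m h).
Proof. by case=> Ug ug [Uh uh]; split; [exact: upper_mul | rewrite unitmx_mul ug uh]. Qed.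

Lemma inB_inv g : inB g -> inB (invmx g).
Proof. by move=> Bg; split; [exact: upper_inv | rewrite unitmx_inv; case: Bg]. Qed.

Lemma inB1 : inB (1%:M : M).
Proof. by split; [move=> i j ji; rewrite mxE (ord_gtF ji) | exact: unitmx1]. Qed.

Lemma invmx_mul g h : g \in unitmx -> h \in unitmx -> invmx (g *m h) = invmx h *m invmx g.
Proof.
move=> ug uh; apply: inv_uniq.
by rewrite mulmxA -(mulmxA g) mulmxV // mulmx1 mulmxV.
Qed.

Lemma conjmM g h X : g \in unitmx -> h \in unitmx ->
  conjm (g *m h) X = conjm g (conjm h X).
Proof. by move=> ug uh; rewrite /conjm invmx_mul // !mulmxA. Qed.

Lemma conjm1 X : conjm 1%:M X = X.
Proof. by rewrite /conjm invmx1 mul1mx mulmx1. Qed.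

Lemma conjmK g X : g \in unitmx -> conjm (invmx g) (conjm g X) = X.
Proof.
move=> ug; by rewrite -conjmM ?unitmx_inv // mulVmx // conjm1.
Qed.

Lemma conjmB g X Y : conjm g (X - Y) = conjm g X - conjm g Y.
Proof. by rewrite /conjm mulmxBr mulmxBl. Qed.

Lemma conj_rel g X : g \in unitmx -> conjm g X *m g = g *m X.
Proof. by move=> ug; rewrite /conjm mulmxKV. Qed.

End Basics.

Section Order.
Variable n : nat.
Implicit Types p q r : 'I_n * 'I_n.

Lemma bprec_trans p q r : bprec p q -> bprec q r -> bprec p r.
Proof.
rewrite /bprec => /orP[h1|/andP[/eqP e1 h1]] /orP[h2|/andP[/eqP e2 h2]].
- by rewrite (ltn_trans h2 h1).
- by rewrite -e2 h1.
- by rewrite e1 h2.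
- by rewrite e1 e2 eqxx (ltn_trans h1 h2) orbT.
Qed.

Lemma bprec_irr p : bprec p p = false.
Proof. by rewrite /bprec ltnn eqxx ltnn. Qed.

Lemma bprec_total p q : p != q -> bprec p q || bprec q p.
Proof.
case: p q => [a b] [c d] /=; rewrite /bprec /= xpair_eqE negb_and => H.
case: (ltngtP a c) => [ac|ca|/val_inj ac]; first by rewrite orbT.
  by [].
subst c; rewrite eqxx /= in H; rewrite eqxx /=.
by case: (ltngtP b d) => [bd|db|/val_inj bd]; rewrite ?orbT //; rewrite bd eqxx in H.
Qed.

Definition preds q := [set r in upos n | bprec r q].

Lemma brank_lt p q : p \in upos n -> bprec p q -> (brank p < brank q)%N.
Proof.
move=> pu pq; rewrite /brank; apply: proper_card; apply/properP; split.
  apply/subsetP => r; rewrite !inE => /andP[ru rp].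
  by rewrite ru (bprec_trans rp pq).
exists p; first by rewrite inE pu pq.
by rewrite inE bprec_irr andbF.
Qed.

Lemma brank_ltE p q : p \in upos n -> q \in upos n ->
  (brank p < brank q)%N = bprec p q.
Proof.
move=> pu qu; apply/idP/idP; last exact: brank_lt.
move=> lt; case: (eqVneq p q) => [E|ne]; first by rewrite E ltnn in lt.
case/orP: (bprec_total ne) => // qp.
by have := brank_lt qu qp; rewrite ltnNge (ltnW lt).
Qed.

Lemma brank_inj p q : p \in upos n -> q \in upos n -> brank p = brank q -> p = q.
Proof.
move=> pu qu E; apply/eqP; apply: contraT => ne.
by case/orP: (bprec_total ne) => H; [have := brank_lt pu H | have := brank_lt qu H];
  rewrite E ltnn.
Qed.

Lemma brank_npos p : p \in upos n -> (brank p < npos n)%N.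
Proof.
move=> pu; rewrite /brank /npos; apply: proper_card; apply/properP; split.
  by apply/subsetP => r; rewrite inE => /andP[].
by exists p => //; rewrite inE bprec_irr andbF.
Qed.

Lemma bprec_weak (a b r c : 'I_n) : (r <= a)%N -> (b <= c)%N -> (a, b) != (r, c) ->
  bprec (a, b) (r, c).
Proof.
move=> ra bc ne; rewrite /bprec /=; case: (ltngtP r a) => [//|ar|/val_inj ar].
  by rewrite ltnNge ra in ar.
subst; rewrite eqxx /= ltn_neqAle bc andbT.
by apply: contra ne => /eqP/val_inj ->.
Qed.

Lemma uposE p : (p \in upos n) = (p.1 < p.2)%N.
Proof. by rewrite inE. Qed.

End Order.

Section ConjEntry.
Variables (F : fieldType) (n : nat).
Local Notation M := 'M[F]_n.
Implicit Types (X Y Z g h : M).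

Definition vanish k X := forall q, q \in upos n -> (brank q < k)%N -> X q.1 q.2 = 0.

Lemma conj_entry k g X (q : 'I_n * 'I_n) : inB g -> strict_upper X -> vanish k X ->
  q \in upos n -> (brank q <= k)%N ->
  conjm g X q.1 q.2 = g q.1 q.1 * X q.1 q.2 * invmx g q.2 q.2.
Proof.
move=> Bg SX VX qu qk; have Uh := upper_inv Bg; case: Bg => Ug _.
case: q qu qk => r c qu qk /=.
have zero : forall a b : 'I_n, (r <= a)%N -> (b <= c)%N -> (a, b) != (r, c) -> X a b = 0.
  move=> a b ra bc ne; case: (ltnP a b) => ab; last exact: SX.
  apply: (VX (a, b)); first by rewrite uposE.
  by apply: leq_trans qk; apply: brank_lt; rewrite ?uposE //; exact: bprec_weak.
rewrite /conjm mxE (bigD1 c) //= big1 ?addr0; last first.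
  move=> b /negPf bc; case: (ltngtP b c) => [lt|gt|/val_inj eq].
  - rewrite mxE big1 ?mul0r // => a _.
    case: (ltnP a r) => ar; first by rewrite Ug ?mul0r.
    rewrite zero ?mulr0 ?(ltnW lt) //.
    by rewrite xpair_eqE bc andbF.
  - by rewrite Uh ?mulr0.
  - by rewrite eq eqxx in bc.
congr (_ * _); rewrite mxE (bigD1 r) //= big1 ?addr0 // => a /negPf ar.
case: (ltnP a r) => ar'; first by rewrite Ug ?mul0r.
by rewrite zero ?mulr0 // xpair_eqE ar.
Qed.

Lemma conj_strict g X : inB g -> strict_upper X -> strict_upper (conjm g X).
Proof.
move=> Bg SX r c cr; have Uh := upper_inv Bg; case: Bg => Ug _.
rewrite /conjm mxE big1 // => b _; rewrite mxE.
case: (ltnP c b) => cb; first by rewrite Uh ?mulr0.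
rewrite big1 ?mul0r // => a _.
case: (ltnP a r) => ar; first by rewrite Ug ?mul0r.
by rewrite SX ?mulr0 // (leq_trans cb) // (leq_trans cr).
Qed.

Lemma strictB X Y : strict_upper X -> strict_upper Y -> strict_upper (X - Y).
Proof. by move=> SX SY i j ji; rewrite !mxE SX // SY // subr0. Qed.

Lemma vanish_ag k X Y : vanish k (X - Y) <-> agree_first k X Y.
Proof.
split=> H q qu qk; have := H q qu qk; rewrite !mxE.
  by move/eqP; rewrite subr_eq0 => /eqP.
by move=> ->; rewrite subrr.
Qed.

Lemma conj_vanish k g X : inB g -> strict_upper X -> vanish k X -> vanish k (conjm g X).
Proof.
move=> Bg SX VX q qu qk; rewrite (conj_entry Bg SX VX qu (ltnW qk)).
by rewrite VX // mulr0 mul0r.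
Qed.

Lemma ag_conj k g X Y : inB g -> strict_upper X -> strict_upper Y ->
  agree_first k X Y -> agree_first k (conjm g X) (conjm g Y).
Proof.
move=> Bg SX SY /vanish_ag V; apply/vanish_ag; rewrite -conjmB.
exact: conj_vanish (strictB SX SY) V.
Qed.

Lemma ag_conj_p k g X Y (p : 'I_n * 'I_n) : inB g -> strict_upper X -> strict_upper Y ->
  agree_first k X Y -> p \in upos n -> brank p = k ->
  conjm g X p.1 p.2 - conjm g Y p.1 p.2 = g p.1 p.1 * (X p.1 p.2 - Y p.1 p.2) * invmx g p.2 p.2.
Proof.
move=> Bg SX SY /vanish_ag V pu pk.
have := conj_entry Bg (strictB SX SY) V pu (eq_leq pk).
by rewrite conjmB !mxE.
Qed.

Lemma ag_refl k X : agree_first k X X. Proof. by []. Qed.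
Lemma ag_sym k X Y : agree_first k X Y -> agree_first k Y X.
Proof. by move=> H q qu qk; rewrite H. Qed.
Lemma ag_trans k X Y Z : agree_first k X Y -> agree_first k Y Z -> agree_first k X Z.
Proof. by move=> H1 H2 q qu qk; rewrite H1 ?H2. Qed.
Lemma ag_mono k l X Y : (l <= k)%N -> agree_first k X Y -> agree_first l X Y.
Proof. by move=> lk H q qu ql; rewrite H // (leq_trans ql lk). Qed.

Definition Stab k X g := inB g /\ agree_first k (conjm g X) X.

Lemma Stab1 k X : Stab k X 1%:M.
Proof. by split; [exact: inB1 | rewrite conjm1]. Qed.

Lemma Stab_mul k X g h : strict_upper X -> Stab k X g -> Stab k X h -> Stab k X (g *m h).
Proof.
move=> SX [Bg Hg] [Bh Hh]; split; first exact: inB_mul.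
rewrite conjmM; [|by case: Bg|by case: Bh].
apply: ag_trans Hg; apply: ag_conj => //; last exact: conj_strict.
Qed.

Lemma Stab_inv k X g : strict_upper X -> Stab k X g -> Stab k X (invmx g).
Proof.
move=> SX [Bg Hg]; split; first exact: inB_inv.
have Bi := inB_inv Bg.
have := ag_conj Bi (conj_strict Bg SX) SX Hg.
by rewrite conjmK //; [move/ag_sym | case: Bg].
Qed.

Lemma Stab_ag k X Y g : strict_upper X -> strict_upper Y -> agree_first k X Y ->
  Stab k X g -> Stab k Y g.
Proof.
move=> SX SY XY [Bg Hg]; split => //.
apply: ag_trans (ag_sym (ag_conj Bg SX SY XY)) _.
exact: ag_trans Hg XY.
Qed.

Lemma Stab_mono k X g : Stab k.+1 X g -> Stab k X g.
Proof. by case=> Bg H; split => //; apply: ag_mono H. Qed.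

End ConjEntry.

Section Shape.
Variables (F : fieldType) (n : nat) (Q : 'M[F]_n).
Local Notation M := 'M[F]_n.
Implicit Types (X Y Z g h : M).
Hypothesis SQ : strict_upper Q.
Hypothesis PQ : subpermutation Q.

Definition zreg (a c : 'I_n) := forall b, Q a b != 0 -> (c < b)%N.
Definition QUs Y := (forall a c, zreg a c -> Y a c = 0) /\ (forall a b, Q a b != 0 -> Y a b = 1).

Lemma Q1 (a b : 'I_n) : Q a b != 0 -> Q a b = 1.
Proof. by case: PQ => H _ nz; case: (H a b) => // E; rewrite E eqxx in nz. Qed.

Lemma Qrow (a b b' : 'I_n) : Q a b != 0 -> Q a b' != 0 -> b = b'.
Proof. by case: PQ => _ [H _]; apply: H. Qed.

Lemma Qcol (a a' b : 'I_n) : Q a b != 0 -> Q a' b != 0 -> a = a'.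
Proof. by case: PQ => _ [_ H]; apply: H. Qed.

Lemma Qlt (a b : 'I_n) : Q a b != 0 -> (a < b)%N.
Proof. by move=> nz; rewrite ltnNge; apply/negP => ba; rewrite SQ ?eqxx in nz. Qed.

Lemma zregE (a b c : 'I_n) : Q a b != 0 -> zreg a c <-> (c < b)%N.
Proof. by move=> nz; split=> [H|cb b' nz']; [exact: H | rewrite -(Qrow nz nz')]. Qed.

Lemma zreg0 (a c : 'I_n) : (forall b, Q a b = 0) -> zreg a c.
Proof. by move=> H b; rewrite H eqxx. Qed.

Lemma zreg_diag (a c : 'I_n) : (c <= a)%N -> zreg a c.
Proof. by move=> ca b nz; apply: leq_ltn_trans ca (Qlt nz). Qed.

Lemma QUs_strict Y : QUs Y -> strict_upper Y.
Proof. by case=> H _ a c ca; apply: H; exact: zreg_diag. Qed.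

Lemma sumQ (w : 'I_n -> F) (a0 c : 'I_n) : Q a0 c != 0 -> \sum_a w a * Q a c = w a0.
Proof.
move=> nz; rewrite (bigD1 a0) //= Q1 // mulr1 big1 ?addr0 // => a ne.
case: (eqVneq (Q a c) 0) => [->|nz']; first by rewrite mulr0.
by rewrite (Qcol nz nz') eqxx in ne.
Qed.

Lemma inQU_QUs Y : inQU Q Y -> QUs Y.
Proof.
case=> U [[UU dU] ->]; split.
  move=> a c za; rewrite mxE big1 // => b _.
  case: (eqVneq (Q a b) 0) => [->|nz]; first by rewrite mul0r.
  by rewrite UU ?mulr0 // za.
move=> a b nz; rewrite mxE (bigD1 b) //= Q1 // dU mulr1 big1 ?addr0 // => b' ne.
case: (eqVneq (Q a b') 0) => [->|nz']; first by rewrite mul0r.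
by rewrite (Qrow nz nz') eqxx in ne.
Qed.

Lemma QUs_inQU Y : QUs Y -> inQU Q Y.
Proof.
case=> Z1 Y1.
pose U : M := \matrix_(b, c) (if [pick a | Q a b != 0] is Some a then Y a c else (b == c)%:R).
exists U; split; first split.
- move=> b c cb; rewrite mxE; case: pickP => [a nz|_]; last by rewrite (ord_gtF cb).
  by apply: Z1; rewrite (zregE _ nz).
- move=> b; rewrite mxE; case: pickP => [a nz|_]; last by rewrite eqxx.
  exact: Y1.
apply/matrixP => a c; rewrite mxE.
case: (pickP (fun b => Q a b != 0)) => [b0 nz|none].
  rewrite (bigD1 b0) //= big1 ?addr0; last first.
    move=> b ne; case: (eqVneq (Q a b) 0) => [->|nz']; first by rewrite mul0r.
    by rewrite (Qrow nz nz') eqxx in ne.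
  rewrite Q1 // mul1r mxE; case: pickP => [a' nz'|/(_ a)]; last by rewrite nz.
  by rewrite (Qcol nz' nz).
rewrite big1 ?Z1 // => [|b _]; last by move/negbFE/eqP: (none b) => ->; rewrite mul0r.
by move=> b; rewrite (negbFE (none b)).
Qed.

Lemma echelon_aux (w : 'I_n -> F) Y (m : nat) : QUs Y ->
  (forall a b : 'I_n, Q a b != 0 -> (b < m)%N -> w a = 0) ->
  forall c : 'I_n, (c <= m)%N -> \sum_a w a * Y a c = \sum_a w a * Q a c.
Proof.
case=> Z1 Y1 H c cm; apply: eq_bigr => a _.
case: (eqVneq (w a) 0) => [->|wa]; first by rewrite !mul0r.
case: (eqVneq (Q a c) 0) => [Qac|nz]; last by rewrite Y1 // Q1.
rewrite Qac Z1 // => b nz; case: (ltngtP c b) => // [bc|/val_inj E].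
  by rewrite (H a b) ?eqxx // (leq_trans bc cm) in wa.
by rewrite -E Qac eqxx in nz.
Qed.

Lemma echelon (w : 'I_n -> F) Y (m : nat) : QUs Y ->
  (forall c : 'I_n, (c < m)%N -> \sum_a w a * Y a c = 0) ->
  forall a b : 'I_n, Q a b != 0 -> (b < m)%N -> w a = 0.
Proof.
move=> QY; elim: m => [|m IH] H a b nz bm //.
rewrite ltnS leq_eqVlt in bm; case/orP: bm => [/eqP bm|bm]; last first.
  by apply: IH nz bm => c cm; apply: H; rewrite ltnS ltnW.
have := H b; rewrite bm ltnSn => /(_ isT).
rewrite (@echelon_aux w Y m QY) ?bm //; last first.
  by move=> a' b' nz' b'm; apply: IH nz' b'm => c cm; apply: H; rewrite ltnS ltnW.
by rewrite (sumQ _ nz).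
Qed.

Lemma echelon_val (w : 'I_n -> F) Y (m : 'I_n) : QUs Y ->
  (forall c : 'I_n, (c < m)%N -> \sum_a w a * Y a c = 0) ->
  \sum_a w a * Y a m = \sum_a w a * Q a m.
Proof.
move=> QY H; apply: (@echelon_aux w Y m QY) => // a b nz bm.
exact: (echelon QY H nz bm).
Qed.

End Shape.

Section Run.
Variables (F : fieldType) (n : nat) (A : 'M[F]_n) (As : nat -> 'M[F]_n).
Local Notation M := 'M[F]_n.
Hypothesis SA : strict_upper A.
Hypothesis run : belitskii_run A As.

Lemma run_props k : (k <= npos n)%N ->
  [/\ strict_upper (As k), exists h, inB h /\ As k = conjm h A
    & forall g, Gk As k g <-> Stab k (As k) g].
Proof.
case: run => A0 steps; elim: k => [_|k IH kn].
  split; first by rewrite A0.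
    by exists 1%:M; rewrite conjm1 A0; split => //; exact: inB1.
  by move=> g; split=> [Bg|[]//]; split.
have [SAk [h [Bh Eh]] HG] := IH (ltnW kn).
have [[g0 [G0 E0]] _] := steps k kn.
have [Bg0 Ag0] := (HG g0).1 G0.
have Ak : agree_first k (As k.+1) (As k) by rewrite E0.
have SAk1 : strict_upper (As k.+1) by rewrite E0; exact: conj_strict.
split => //.
  exists (g0 *m h); split; first exact: inB_mul.
  by rewrite E0 Eh conjmM //; [case: Bg0 | case: Bh].
move=> g; split => /=.
  by case=> /(HG g) [Bg _] H; split.
move=> St; split; last by case: St.
apply/(HG g); exact: Stab_ag SAk1 SAk Ak (Stab_mono St).
Qed.

Lemma run_next k : (k < npos n)%N ->
  exists g0, Stab k (As k) g0 /\ As k.+1 = conjm g0 (As k).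
Proof.
move=> kn; have [_ _ HG] := run_props (ltnW kn).
case: run => _ steps; have [[g0 [G0 E0]] _] := steps k kn.
by exists g0; split => //; apply/HG.
Qed.

End Run.

Section Constr.
Variables (F : fieldType) (n : nat).
Local Notation M := 'M[F]_n.
Implicit Types (X Y Z g h : M).

Lemma entD (A B : M) i j : (A + B) i j = A i j + B i j. Proof. by rewrite mxE. Qed.
Lemma entN (A : M) i j : (- A) i j = - A i j. Proof. by rewrite mxE. Qed.
Lemma entZ a (A : M) i j : (a *: A) i j = a * A i j. Proof. by rewrite mxE. Qed.

Definition rowW (i : 'I_n) (w : 'I_n -> F) : M := \matrix_(r, c) ((r == i)%:R * w c).

Lemma rowW_sq (i : 'I_n) (w : 'I_n -> F) : (forall a : 'I_n, (a <= i)%N -> w a = 0) -> rowW i w *m rowW i w = 0.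
Proof.
move=> wi; apply/matrixP => r c; rewrite !mxE big1 // => b _; rewrite !mxE.
case: (eqVneq b i) => [->|ne]; first by rewrite wi ?mulr0 ?mul0r.
by rewrite ?(negPf ne) mul0r mulr0.
Qed.

Lemma rowop_inv (i : 'I_n) (w : 'I_n -> F) (t : F) : (forall a : 'I_n, (a <= i)%N -> w a = 0) ->
  (1%:M + t *: rowW i w) *m (1%:M - t *: rowW i w) = 1%:M.
Proof.
move=> wi; rewrite mulmxDl mul1mx mulmxBr mulmx1 -scalemxAl -scalemxAr.
by rewrite scalerA rowW_sq // scaler0 subr0 subrK.
Qed.

Lemma rowop_inB (i : 'I_n) (w : 'I_n -> F) (t : F) : (forall a : 'I_n, (a <= i)%N -> w a = 0) ->
  inB (1%:M + t *: rowW i w).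
Proof.
move=> wi; split; last by case: (mulmx1_unit (rowop_inv t wi)).
move=> r c cr; rewrite !mxE (ord_gtF cr) mulr0n add0r.
case: (eqVneq r i) => [E|ne]; last by rewrite ?(negPf ne) mul0r mulr0.
by rewrite E in cr; rewrite wi ?mulr0 // ltnW.
Qed.

Lemma rowop_conj (i : 'I_n) (w : 'I_n -> F) (t : F) Y : (forall a : 'I_n, (a <= i)%N -> w a = 0) -> strict_upper Y ->
  forall r c : 'I_n, (i <= r)%N ->
  conjm (1%:M + t *: rowW i w) Y r c = Y r c + (r == i)%:R * t * \sum_a w a * Y a c.
Proof.
move=> wi SY r c ir; rewrite /conjm (inv_uniq (rowop_inv t wi)).
set W := rowW i w.
have E1 : (Y *m W) r c = 0.
  rewrite mxE big1 // => b _; rewrite mxE.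
  case: (eqVneq b i) => [->|ne]; last by rewrite ?(negPf ne) mul0r mulr0.
  by rewrite SY ?mul0r.
have E2 : (W *m Y *m W) r c = 0.
  rewrite mxE big1 // => b _; rewrite !mxE.
  case: (eqVneq b i) => [->|ne]; last by rewrite ?(negPf ne) mul0r mulr0.
  rewrite big1 ?mul0r // => a _; rewrite mxE.
  case: (leqP a i) => ai; first by rewrite wi ?mulr0 ?mul0r.
  by rewrite SY ?mulr0 // ltnW.
have E3 : (W *m Y) r c = (r == i)%:R * \sum_a w a * Y a c.
  by rewrite mxE mulr_sumr; apply: eq_bigr => a _; rewrite mxE mulrA.
rewrite mulmxBr mulmx1 mulmxDl mul1mx mulmxDl -!scalemxAl -!scalemxAr scalerA.
by rewrite !(entD, entN, entZ) E1 E2 E3 !mulr0 addr0 oppr0 addr0 mulrA [t * _]mulrC.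
Qed.

Definition dg (d : 'I_n -> F) : M := diag_mx (\row_c d c).

Lemma dgE (d : 'I_n -> F) (a b : 'I_n) : dg d a b = (a == b)%:R * d a.
Proof. by rewrite !mxE mulr_natl. Qed.

Lemma dg_mul (d e : 'I_n -> F) : dg d *m dg e = dg (fun c => d c * e c).
Proof.
apply/matrixP => a b; rewrite mul_diag_mx !mxE.
by case: (eqVneq a b) => [->|ne]; rewrite ?mulr1n ?mulr0n ?mulr0.
Qed.

Lemma dg1 : dg (fun _ => 1) = 1%:M.
Proof. by apply/matrixP => a b; rewrite dgE mulr1 !mxE. Qed.

Lemma dg_inv (d : 'I_n -> F) : (forall c, d c != 0) -> invmx (dg d) = dg (fun c => (d c)^-1).
Proof.
move=> nz; apply: inv_uniq; rewrite dg_mul -dg1.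
by apply/matrixP => a b; rewrite !dgE mulfV.
Qed.

Lemma dg_inB (d : 'I_n -> F) : (forall c, d c != 0) -> inB (dg d).
Proof.
move=> nz; split.
  by move=> a b ba; rewrite dgE (ord_gtF ba) mul0r.
case: (mulmx1_unit (_ : dg d *m dg (fun c => (d c)^-1) = 1%:M)) => //.
by rewrite dg_mul -dg1; apply/matrixP => a b; rewrite !dgE mulfV.
Qed.

Lemma dg_conj (d : 'I_n -> F) X (a b : 'I_n) : (forall c, d c != 0) ->
  conjm (dg d) X a b = d a * X a b * (d b)^-1.
Proof.
move=> nz; rewrite /conjm dg_inv // /dg mul_mx_diag mul_diag_mx !mxE.
by [].
Qed.

Lemma dg_diag (d : 'I_n -> F) : forall a b : 'I_n, a != b -> dg d a b = 0.
Proof. by move=> a b ne; rewrite dgE (negPf ne) mul0r. Qed.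

Definition trunc (i : nat) g : M := \matrix_(r, c) (if (r < i)%N then (r == c)%:R else g r c).

Lemma trunc_inB i g : inB g -> inB (trunc i g).
Proof.
case=> Ug ug; have dg0 : forall c, g c c != 0 by move: ug; rewrite unit_upper // => /forallP.
have Ut : upper_tri (trunc i g).
  by move=> r c cr; rewrite mxE; case: ifP => _; [rewrite (ord_gtF cr) | exact: Ug].
split => //; rewrite unit_upper //; apply/forallP => c; rewrite mxE.
by case: ifP => _; [rewrite eqxx oner_neq0 | exact: dg0].
Qed.

Lemma upper_rowmul (v : 'I_n -> F) h (s : nat) : upper_tri h ->
  (forall b : 'I_n, (b < s)%N -> v b = 0) ->
  forall c : 'I_n, (c < s)%N -> \sum_b v b * h b c = 0.
Proof.
move=> Uh vs c cs; apply: big1 => b _.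
case: (ltnP c b) => cb; first by rewrite Uh ?mulr0.
by rewrite vs ?mul0r // (leq_ltn_trans cb cs).
Qed.

Lemma upper_rowlead (v : 'I_n -> F) h (s : 'I_n) : upper_tri h ->
  (forall b : 'I_n, (b < s)%N -> v b = 0) ->
  \sum_b v b * h b s = v s * h s s.
Proof.
move=> Uh vs; rewrite (bigD1 s) //= big1 ?addr0 // => b ne.
case: (ltngtP b s) => [lt|gt|/val_inj E]; first by rewrite vs ?mul0r.
  by rewrite Uh ?mulr0.
by rewrite E eqxx in ne.
Qed.

Lemma trunc_low i g Y : inB g -> forall r c : 'I_n, (r < i)%N ->
  conjm (trunc i g) Y r c = \sum_b Y r b * invmx (trunc i g) b c.
Proof.
move=> Bg r c ri; rewrite /conjm mxE; apply: eq_bigr => b _; congr (_ * _).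
rewrite mxE (bigD1 r) //= big1 ?addr0; first by rewrite mxE ri eqxx mul1r.
by move=> a ne; rewrite mxE ri eq_sym (negPf ne) mul0r.
Qed.

Lemma trunc_high i g Y : inB g -> strict_upper Y -> forall r c : 'I_n, (i <= r)%N ->
  conjm (trunc i g) Y r c = conjm g Y r c.
Proof.
move=> Bg SY r c ir; have Bt := trunc_inB i Bg.
set gt := trunc i g; set Z := conjm g Y; set Z' := conjm gt Y.
have SZ : strict_upper Z by exact: conj_strict.
have rows : forall c', (Z *m gt) r c' = (Z' *m gt) r c'.
  move=> c'; rewrite conj_rel; last by case: Bt.
  have -> : (gt *m Y) r c' = (g *m Y) r c'.
    by rewrite !mxE; apply: eq_bigr => a _; rewrite mxE ltnNge ir.
  rewrite -(conj_rel Y); last by case: Bg.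
  rewrite !mxE; apply: eq_bigr => b _.
  case: (leqP b r) => br; first by rewrite SZ ?mul0r.
  suff -> : gt b c' = g b c' by []. by rewrite mxE ltnNge (leq_trans ir (ltnW br)).
have ug : gt \in unitmx by case: Bt.
have -> : Z' = Z' *m gt *m invmx gt by rewrite mulmxK.
have -> : Z = Z *m gt *m invmx gt by rewrite mulmxK.
by rewrite !mxE; apply: eq_bigr => b _; rewrite rows.
Qed.

End Constr.

Section DiagExt.
Variables (F : fieldType) (n : nat) (Q X : 'M[F]_n) (i : nat).
Hypothesis Qrow : forall a b b' : 'I_n, Q a b != 0 -> Q a b' != 0 -> b = b'.
Hypothesis Qlt : forall a b : 'I_n, Q a b != 0 -> (a < b)%N.
Hypothesis Xnz : forall a b : 'I_n, Q a b != 0 -> X a b != 0.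
Hypothesis X1 : forall a b : 'I_n, Q a b != 0 -> (i <= a)%N -> X a b = 1.

Lemma diag_ext_aux m : exists d : 'I_n -> F, [/\ forall c, d c != 0,
  forall c : 'I_n, (i <= c)%N -> d c = 1 &
  forall a b : 'I_n, Q a b != 0 -> (n <= a + m)%N -> d a * X a b = d b].
Proof.
elim: m => [|m [d [dnz d1 dX]]].
  exists (fun _ => 1); split => // [c|a b _]; first exact: oner_neq0.
  by rewrite addn0 => na; have := ltn_ord a; rewrite ltnNge na.
case: (ltnP m n) => mn; last first.
  exists d; split => // a b nz _; apply: dX nz _.
  by apply: leq_trans mn _; rewrite leq_addl.
have a0lt : (n - m.+1 < n)%N by lia.
pose a0 : 'I_n := Ordinal a0lt.
pose d' (c : 'I_n) := if (c == a0) && (a0 < i)%N then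
  (if [pick b | Q a0 b != 0] is Some b then d b / X a0 b else 1) else d c.
exists d'; split.
- move=> c; rewrite /d'; case: ifP => _; last exact: dnz.
  case: pickP => [b nz|_]; last exact: oner_neq0.
  by rewrite mulf_neq0 ?invr_eq0 ?dnz ?Xnz.
- move=> c ic; rewrite /d'; case: ifP => [/andP[/eqP E a0i]|_]; last exact: d1.
  by rewrite -E ltnNge ic in a0i.
move=> a b nz nam.
have ab := Qlt nz.
have a0a : (a0 <= a)%N.
  by rewrite /=; lia.
have db : d' b = d b.
  rewrite /d'; case: ifP => // /andP[/eqP E _].
  by rewrite E in ab; rewrite ltnNge a0a in ab.
rewrite db /d'; case: (eqVneq a a0) => [E|ne] /=; last first.
  apply: dX nz _; have : (val a != val a0) by rewrite (inj_eq val_inj).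
  rewrite /= => ne'; move: a0a ne' nam mn; rewrite /=; lia.
case: ifP => a0i.
  case: pickP => [b' nz'|/(_ b)]; last by rewrite -E nz.
  rewrite -E in nz'; rewrite (Qrow nz nz') -E divfK //; exact: Xnz.
have ia : (i <= a)%N by rewrite E leqNgt a0i.
by rewrite X1 // mulr1 d1 // d1 // (leq_trans ia (ltnW ab)).
Qed.

Lemma diag_ext : exists d : 'I_n -> F, [/\ forall c, d c != 0,
  forall c : 'I_n, (i <= c)%N -> d c = 1 &
  forall a b : 'I_n, Q a b != 0 -> d a * X a b * (d b)^-1 = 1].
Proof.
have [d [dnz d1 dX]] := diag_ext_aux n.
exists d; split => // a b nz.
by rewrite dX ?leq_addl // divff.
Qed.

End DiagExt.

Section Main.
Variables (F : fieldType) (n : nat) (Q A : 'M[F]_n) (As : nat -> 'M[F]_n).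
Local Notation M := 'M[F]_n.
Implicit Types (X Y Z g h : M).
Hypothesis SQ : strict_upper Q.
Hypothesis PQ : subpermutation Q.
Hypothesis QA : QUs Q A.
Hypothesis run : belitskii_run A As.

Lemma SA : strict_upper A. Proof. exact: (@QUs_strict F n Q SQ A QA). Qed.

Definition IHk k := forall g, Stab k (As k) g -> forall q, q \in upos n -> (brank q < k)%N ->
  As k q.1 q.2 != 0 -> g q.1 q.1 = g q.2 q.2.

Definition Inv k := exists Y, [/\ QUs Q Y, exists h, inB h /\ Y = conjm h A
  & agree_first k Y (As k)].

Definition orbA Y := exists h, inB h /\ Y = conjm h A.

Lemma orbA_strict Y : orbA Y -> strict_upper Y.
Proof. by case=> h [Bh ->]; apply: conj_strict Bh SA. Qed.

Section Step.
Variable k : nat.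
Hypothesis kn : (k < npos n)%N.
Hypothesis IH : IHk k.

Let props := run_props SA run (ltnW kn).
Lemma SAk : strict_upper (As k). Proof. by case: props. Qed.
Lemma orbAk : orbA (As k). Proof. by case: props. Qed.
Lemma HGk g : Gk As k g <-> Stab k (As k) g. Proof. by case: props. Qed.

Let props1 := run_props SA run kn.
Lemma SAk1 : strict_upper (As k.+1). Proof. by case: props1. Qed.
Lemma HGk1 g : Gk As k.+1 g <-> Stab k.+1 (As k.+1) g. Proof. by case: props1. Qed.

Lemma ag_next : agree_first k (As k.+1) (As k).
Proof. by have [g0 [[_ H] ->]] := run_next SA run kn. Qed.

Section Rep.
Variable Y0 : M.
Hypothesis oY : orbA Y0.
Hypothesis agY : agree_first k Y0 (As k).

Lemma SY0 : strict_upper Y0. Proof. exact: orbA_strict. Qed.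

Lemma StabE g : Stab k Y0 g <-> Stab k (As k) g.
Proof.
split; first exact: Stab_ag SY0 SAk agY.
exact: Stab_ag SAk SY0 (ag_sym agY).
Qed.

Lemma orbit_rel : exists c, Stab k Y0 c /\ As k = conjm c Y0.
Proof.
case: oY => h0 [B0 E0]; case: orbAk => hk [Bk Ek].
have u0 : h0 \in unitmx by case: B0.
have uk : hk \in unitmx by case: Bk.
have E : As k = conjm (hk *m invmx h0) Y0.
  by rewrite E0 conjmM ?unitmx_inv // conjmK // Ek.
exists (hk *m invmx h0); split => //; split; first by apply: inB_mul => //; exact: inB_inv.
by rewrite -E; apply: ag_sym.
Qed.

Lemma Vchar (p : 'I_n * 'I_n) x :
  orbit_vals As k p x <-> exists g, Stab k Y0 g /\ conjm g Y0 p.1 p.2 = x.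
Proof.
have [c [Sc Ec]] := orbit_rel.
have uc : c \in unitmx by case: Sc => [[]].
split.
  case=> g [/HGk /StabE Sg <-]; exists (g *m c); split; first exact: Stab_mul SY0 Sg Sc.
  by rewrite Ec conjmM //; case: Sg => [[]].
case=> g [Sg <-]; exists (g *m invmx c); split.
  by apply/HGk/StabE; apply: Stab_mul SY0 Sg (Stab_inv SY0 Sc).
have ug : g \in unitmx by case: Sg => [[]].
by rewrite Ec -conjmM ?unitmx_mul ?unitmx_inv ?ug ?uc // -mulmxA mulVmx // mulmx1.
Qed.

Lemma IHY g : Stab k Y0 g -> forall q, q \in upos n -> (brank q < k)%N ->
  Y0 q.1 q.2 != 0 -> g q.1 q.1 = g q.2 q.2.
Proof.
move=> /StabE Sg q qu qk nz; apply: (IH Sg qu qk).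
by rewrite -(agY qu qk).
Qed.

Definition lk (a b : 'I_n) := forall g, Stab k Y0 g -> g a a = g b b.

Lemma scale (i j : 'I_n) : (exists g0, Stab k Y0 g0 /\ g0 i i != g0 j j) ->
  forall t : F, t != 0 -> exists d : 'I_n -> F,
  [/\ forall c, d c != 0, d i = t, d j = 1 & Stab k Y0 (dg d)].
Proof.
case=> g0 [S0 ne] t tnz.
pose d (c : 'I_n) := if excluded_middle_informative (lk i c) then t else 1.
have dnz : forall c, d c != 0 by move=> c; rewrite /d; case: excluded_middle_informative => H; [exact: tnz | exact: oner_neq0].
exists d; split => //.
- by rewrite /d; case: excluded_middle_informative => // H; exfalso; apply: H => g _.
- rewrite /d; case: excluded_middle_informative => // H.
  by move: ne; rewrite H ?eqxx.
split; first exact: dg_inB.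
move=> q qu qk; rewrite dg_conj //.
case: (eqVneq (Y0 q.1 q.2) 0) => [->|nz]; first by rewrite mulr0 mul0r.
have L : lk q.1 q.2 by move=> g Sg; apply: IHY.
have -> : d q.1 = d q.2.
  rewrite /d; do 2 case: excluded_middle_informative => //.
  - by move=> H1 H2; case: H1 => g Sg; rewrite H2 // L.
  - by move=> H1 H2; case: H2 => g Sg; rewrite H1 // -L.
by rewrite mulrAC divff ?mul1r.
Qed.

End Rep.

Lemma entM (P R : M) (a b : 'I_n) : (P *m R) a b = \sum_c P a c * R c b.
Proof. by rewrite mxE. Qed.

Section Pos.
Variables i j : 'I_n.
Hypothesis pu : (i < j)%N.
Hypothesis pk : brank (i, j) = k.

Lemma puE : (i, j) \in upos n. Proof. by rewrite uposE. Qed.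

Lemma proc (q : 'I_n * 'I_n) : q \in upos n -> (brank q < k)%N ->
  (i < q.1)%N \/ (q.1 = i /\ (q.2 < j)%N).
Proof.
move=> qu qk; rewrite -pk (brank_ltE qu puE) /bprec /= in qk.
case/orP: qk => [->|/andP[/eqP -> ->]]; [by left | by right].
Qed.

Lemma proc_inv (r c : 'I_n) : (r < c)%N -> (i < r)%N \/ (r = i /\ (c < j)%N) ->
  (brank (r, c) < k)%N.
Proof.
move=> rc H; rewrite -pk brank_ltE ?uposE ?puE // /bprec /=.
by case: H => [->|[-> ->]] //; rewrite eqxx orbT.
Qed.

Lemma le_k (q : 'I_n * 'I_n) : q \in upos n -> (brank q < k.+1)%N ->
  (brank q < k)%N \/ q = (i, j).
Proof.
move=> qu; rewrite ltnS leq_eqVlt => /orP[/eqP E|]; last by left.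
by right; apply: brank_inj qu puE _; rewrite E pk.
Qed.

Lemma ag_succ Y : agree_first k Y (As k) -> Y i j = As k.+1 i j ->
  agree_first k.+1 Y (As k.+1).
Proof.
move=> agY Ep q qu qk; have [lt|->] := le_k qu qk; last by [].
by rewrite (agY q qu lt) (ag_next qu lt).
Qed.

Lemma finish Y : QUs Q Y -> orbA Y -> agree_first k Y (As k) -> Y i j = As k.+1 i j ->
  (forall g, Stab k.+1 (As k.+1) g -> As k.+1 i j != 0 -> g i i = g j j) ->
  Inv k.+1 /\ IHk k.+1.
Proof.
move=> QY oY agY Ep Hp; split; first by exists Y; split => //; exact: ag_succ.
move=> g Sg q qu qk nz; have [lt|E] := le_k qu qk; last by rewrite E in nz *; exact: Hp.
have Sg' : Stab k (As k) g.
  exact: Stab_ag SAk1 SAk ag_next (Stab_mono Sg).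
by apply: (IH Sg' qu lt); rewrite -(ag_next qu lt).
Qed.

Definition wrow g (a : 'I_n) := if (i < a)%N then g i a else 0.

Lemma wrow_low g (a : 'I_n) : (a <= i)%N -> wrow g a = 0.
Proof. by rewrite /wrow leqNgt => /negPf ->. Qed.

Lemma rowrel Y g (c : 'I_n) : strict_upper Y -> Stab k Y g -> (c <= j)%N ->
  (forall b : 'I_n, (b < c)%N -> Y i b = 0) ->
  conjm g Y i c * g c c = g i i * Y i c + \sum_a wrow g a * Y a c.
Proof.
move=> SY [Bg agg] cj zb.
have ug : g \in unitmx by case: Bg.
have Ug : upper_tri g by case: Bg.
have := congr1 (fun m : M => m i c) (conj_rel Y ug).
have SZ := conj_strict Bg SY.
have agZ : forall b : 'I_n, (i < b)%N -> (b < c)%N -> conjm g Y i b = Y i b.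
  move=> b ib bc; apply: (agg (i, b)); first by rewrite uposE.
  by apply: proc_inv => //; right; split => //; apply: leq_trans bc cj.
move: SZ agZ; set Z := conjm g Y; clearbody Z => SZ agZ.
rewrite !entM => E.
have -> : Z i c * g c c = \sum_b Z i b * g b c.
  rewrite (bigD1 c) //= big1 ?addr0 // => b /negPf bc.
  case: (ltngtP b c) => [lt|gt|/val_inj eq].
  - case: (leqP b i) => ib; first by rewrite SZ ?mul0r.
    by rewrite agZ // zb ?mul0r.
  - by rewrite Ug ?mulr0.
  - by rewrite eq eqxx in bc.
rewrite E (bigD1 i) //=; congr (_ + _).
rewrite [RHS](bigD1 i) //= wrow_low // mul0r add0r; apply: eq_bigr => a ne.
rewrite /wrow; case: ltnP => // ai.
by rewrite Ug ?mul0r // ltn_neqAle ai andbT; apply: contra ne => /eqP/val_inj ->.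
Qed.

Lemma rule : let V := orbit_vals As k (i, j) in
  [/\ ((forall x, V x -> x = 0) \/ (forall x, V x)) -> As k.+1 i j = 0,
      (forall x, V x <-> x != 0) -> As k.+1 i j = 1
    & ~ ((forall x, V x -> x = 0) \/ (forall x, V x)) ->
      ~ (forall x, V x <-> x != 0) -> As k.+1 = As k].
Proof. by case: run => _ /(_ k kn) [_ R]; exact: (R (i, j) puE pk). Qed.

Lemma diag_nz g (c : 'I_n) : inB g -> g c c != 0.
Proof. by case=> Ug ug; move: ug; rewrite unit_upper // => /forallP. Qed.

Lemma stepA Y : QUs Q Y -> orbA Y -> agree_first k Y (As k) -> zreg Q i j ->
  Inv k.+1 /\ IHk k.+1.
Proof.
move=> QY oY agY za.
have SY := orbA_strict oY.
have zc : forall c : 'I_n, (c <= j)%N -> Y i c = 0.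
  by move=> c cj; case: QY => H _; apply: H => b nz; apply: leq_ltn_trans cj (za b nz).
have Y0p : Y i j = 0 by exact: zc.
have full : (exists x, orbit_vals As k (i, j) x /\ x != 0) -> forall y, orbit_vals As k (i, j) y.
  case=> x [/(Vchar oY agY) [g [Sg gx]] xnz] y; apply/(Vchar oY agY).
  have Bg : inB g by case: Sg.
  have r_j := rowrel SY Sg (leqnn j) (fun b bj => zc b (ltnW bj)).
  have r_c : forall c : 'I_n, (c < j)%N -> \sum_a wrow g a * Y a c = 0.
    move=> c cj.
    have := rowrel SY Sg (ltnW cj) (fun b bc => zc b (ltnW (ltn_trans bc cj))).
    have -> : conjm g Y i c = 0.
      case: (leqP c i) => ci; first exact: (conj_strict Bg SY ci).
      rewrite (Sg.2 (i, c)) ?uposE //=; first exact: zc (ltnW cj).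
      by apply: proc_inv => //; right.
    by rewrite mul0r zc ?(ltnW cj) // mulr0 add0r => /esym.
  rewrite Y0p mulr0 add0r /= gx in r_j.
  have gjj := diag_nz j Bg.
  pose t := y / (x * g j j).
  have wl : forall a : 'I_n, (a <= i)%N -> wrow g a = 0 by move=> a; exact: wrow_low.
  exists (1%:M + t *: rowW i (wrow g)); split.
    split; first exact: rowop_inB.
    move=> q qu qk; have [lt|[e lt]] := proc qu qk.
      by rewrite rowop_conj // ?(ltnW lt) // (ord_gtF lt) !mul0r addr0.
    by rewrite rowop_conj // ?e // eqxx mul1r r_c // mulr0 addr0.
  rewrite /= rowop_conj // eqxx mul1r Y0p add0r -r_j /t.
  by rewrite mulfVK // mulf_neq0.
have E : As k.+1 i j = 0.
  have [Ra _ _] := rule.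
  case: (classic (exists x, orbit_vals As k (i, j) x /\ x != 0)) => [H|H].
    by apply: Ra; right; exact: full H.
  apply: Ra; left => x Vx; apply/eqP; apply: contraT => nz; case: H; exists x.
  by split.
apply: finish QY oY agY _ _; first by rewrite Y0p E.
by move=> g _; rewrite E eqxx.
Qed.

Lemma V1 Y : orbA Y -> agree_first k Y (As k) -> orbit_vals As k (i, j) (As k i j).
Proof.
move=> oY agY; exists 1%:M; split; last by rewrite conjm1.
by apply/HGk; exact: Stab1.
Qed.

Lemma stepB Y : QUs Q Y -> orbA Y -> agree_first k Y (As k) -> Q i j != 0 ->
  Inv k.+1 /\ IHk k.+1.
Proof.
move=> QY oY agY nz.
have SY := orbA_strict oY.
have Y1 : Y i j = 1 by case: QY => _ H; exact: H.
have zc : forall c : 'I_n, (c < j)%N -> Y i c = 0.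
  by move=> c cj; case: QY => H _; apply: H; rewrite (zregE PQ _ nz).
have val : forall g, Stab k Y g -> conjm g Y i j = g i i / g j j.
  move=> g Sg; have Bg : inB g by case: Sg.
  have r_c : forall c : 'I_n, (c < j)%N -> \sum_a wrow g a * Y a c = 0.
    move=> c cj.
    have := rowrel SY Sg (ltnW cj) (fun b bc => zc b (ltn_trans bc cj)).
    have -> : conjm g Y i c = 0.
      case: (leqP c i) => ci; first exact: (conj_strict Bg SY ci).
      rewrite (Sg.2 (i, c)) ?uposE //=; first exact: zc cj.
      by apply: proc_inv => //; right.
    by rewrite mul0r zc // mulr0 add0r => /esym.
  have ech := echelon_val PQ QY r_c.
  rewrite (sumQ PQ _ nz) wrow_low // in ech.
  have := rowrel SY Sg (leqnn j) zc.
  rewrite Y1 mulr1 ech addr0 => E.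
  by rewrite -E mulfK // diag_nz.
have V_iff : forall x, orbit_vals As k (i, j) x <-> exists g, Stab k Y g /\ g i i / g j j = x.
  move=> x; rewrite (Vchar oY agY); split; case=> g [Sg <-]; exists g; split => //=.
    by rewrite val.
  by rewrite val.
have Vn0 : forall x, orbit_vals As k (i, j) x -> x != 0.
  move=> x /V_iff [g [Sg <-]]; have Bg : inB g by case: Sg.
  by rewrite mulf_neq0 ?invr_eq0 ?diag_nz.
have Vy1 : orbit_vals As k (i, j) 1.
  by apply/V_iff; exists 1%:M; split; [exact: Stab1 | rewrite !mxE !eqxx /= mulr1n divr1].
have E : As k.+1 i j = 1.
  have [Ra Rb Rc] := rule.
  case: (classic (forall x, orbit_vals As k (i, j) x <-> x != 0)) => [Hb|Hb]; first exact: Rb.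
  have nA : ~ ((forall x, orbit_vals As k (i, j) x -> x = 0) \/ (forall x, orbit_vals As k (i, j) x)).
    case=> [H|H]; first by move: (H 1 Vy1); apply/eqP; exact: oner_neq0.
    by move: (Vn0 0 (H 0)); rewrite eqxx.
  have Ek := Rc nA Hb; rewrite Ek.
  have /V_iff [g [Sg <-]] := V1 oY agY.
  case: (classic (exists g0, Stab k Y g0 /\ g0 i i != g0 j j)) => [Hs|Hs].
    exfalso; apply: Hb => x; split; first exact: Vn0.
    move=> xnz; have [d [dnz di dj Sd]] := scale oY agY Hs xnz.
    apply/(Vchar oY agY); exists (dg d); split => //.
    by rewrite dg_conj //= di dj Y1 invr1 !mulr1.
  have -> : g i i = g j j.
    by apply: NNPP => ne; apply: Hs; exists g; split => //; apply/eqP.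
  by rewrite divff // diag_nz //; case: Sg.
apply: (finish QY oY agY); first by rewrite Y1 E.
move=> g Sg _.
have agY1 := ag_succ agY (etrans Y1 (esym E)).
have SgY : Stab k.+1 Y g by apply: Stab_ag SAk1 SY (ag_sym agY1) Sg.
have := val g (Stab_mono SgY).
rewrite (SgY.2 (i, j) puE) /= ?pk // Y1 => /esym E'.
have Bg : inB g by case: Sg.
by rewrite -(divfK (diag_nz j Bg) (g i i)) E' mul1r.
Qed.

Lemma stepC Y (b0 : 'I_n) : QUs Q Y -> orbA Y -> agree_first k Y (As k) ->
  Q i b0 != 0 -> (b0 < j)%N -> Inv k.+1 /\ IHk k.+1.
Proof.
move=> QY oY agY nz0 b0j.
have SY := orbA_strict oY.
have [g0 [S0 E0]] := run_next SA run kn.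
have [c [Sc Ec]] := orbit_rel oY agY.
have Sg : Stab k Y (g0 *m c) by apply: Stab_mul SY ((StabE oY agY g0).2 S0) Sc.
have Bg : inB (g0 *m c) by case: Sg.
have Eg : As k.+1 = conjm (g0 *m c) Y.
  by rewrite E0 Ec conjmM //; [case: S0 => [[]] | case: Sc => [[]]].
move: Sg Bg Eg; set g := g0 *m c => Sg Bg Eg.
have Bt := trunc_inB i Bg.
have Uti := upper_inv Bt.
have Xhigh : forall r c' : 'I_n, (i <= r)%N -> conjm (trunc i g) Y r c' = As k.+1 r c'.
  by move=> r c' ir; rewrite trunc_high // Eg.
have Xlow : forall r c' : 'I_n, (r < i)%N ->
    conjm (trunc i g) Y r c' = \sum_b Y r b * invmx (trunc i g) b c'.
  by move=> r c' ri; rewrite trunc_low.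
move: Xhigh Xlow; set X := conjm (trunc i g) Y => Xhigh Xlow.
have cons : forall r c' : 'I_n, (i <= r)%N -> zreg Q r c' \/ Q r c' != 0 ->
    As k.+1 r c' = Y r c'.
  move=> r c' ir H; case: (leqP c' r) => cr; first by rewrite SAk1 // SY.
  have rcp : (brank (r, c') < k)%N.
    apply: proc_inv => //; move: ir; rewrite leq_eqVlt => /orP[/eqP ir|ir]; last by left.
    have ri : r = i by apply: val_inj.
    right; split => //; rewrite ri in H; case: H => [z|nz].
      by apply: ltn_trans b0j; rewrite -(zregE PQ _ nz0).
    by rewrite (Qrow PQ nz nz0).
  by rewrite (ag_next (_ : (r, c') \in upos n) rcp) ?uposE // -(agY _ _ rcp) ?uposE.
have Xnz : forall a b : 'I_n, Q a b != 0 -> X a b != 0.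
  move=> a b nz; case: (ltnP a i) => ai.
    rewrite Xlow // (upper_rowlead Uti); last first.
      by move=> b' b'b; case: QY => H _; apply: H; rewrite (zregE PQ _ nz).
    by case: QY => _ H; rewrite H // mul1r diag_inv // invr_eq0 diag_nz.
  by rewrite Xhigh // cons //; [case: QY => _ H; rewrite H // oner_neq0 | right].
have X1 : forall a b : 'I_n, Q a b != 0 -> (i <= a)%N -> X a b = 1.
  by move=> a b nz ia; rewrite Xhigh // cons //; [case: QY => _ H; exact: H | right].
have [d [dnz d1 dX]] := @diag_ext F n Q X i (Qrow PQ) (Qlt SQ) Xnz X1.
have Y'E : forall a b, conjm (dg d) X a b = d a * X a b * (d b)^-1.
  by move=> a b; rewrite dg_conj.
move: Y'E; set Y' := conjm (dg d) X => Y'E.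
have Y'high : forall r c' : 'I_n, (i <= r)%N -> Y' r c' = As k.+1 r c'.
  move=> r c' ir; rewrite Y'E; case: (leqP c' r) => cr.
    by rewrite Xhigh // SAk1 // mulr0 mul0r.
  by rewrite d1 // d1 ?(leq_trans ir (ltnW cr)) // invr1 mul1r mulr1 Xhigh.
have QY' : QUs Q Y'.
  split; last by move=> a b nz; rewrite Y'E; exact: dX.
  move=> a c' z; case: (ltnP a i) => ai.
    rewrite Y'E Xlow // (upper_rowmul (s := c'.+1) Uti) ?mulr0 ?mul0r //.
    move=> b bc; case: QY => H _; apply: H => b' nz; apply: leq_ltn_trans (z b' nz).
    by rewrite -ltnS.
  by rewrite Y'high // cons //; [case: QY => H _; exact: H | left].
have oY' : orbA Y'.
  case: oY => h [Bh Eh]; exists (dg d *m trunc i g *m h); split.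
    by apply: inB_mul => //; apply: inB_mul => //; exact: dg_inB.
  have ud : dg d \in unitmx by case: (dg_inB dnz).
  have ut : trunc i g \in unitmx by case: Bt.
  have uh : h \in unitmx by case: Bh.
  by rewrite /Y' /X Eh !conjmM ?unitmx_mul ?ud ?ut.
have agY'1 : agree_first k.+1 Y' (As k.+1).
  move=> q qu qk; apply: Y'high; have [lt|->] := le_k qu qk; last by [].
  by case: (proc qu lt) => [/ltnW|[-> _]].
have agY' : agree_first k Y' (As k) by apply: ag_trans (ag_mono _ agY'1) ag_next.
apply: (finish QY' oY' agY'); first by rewrite Y'high.
move=> g1 Sg1 vnz; apply: NNPP => ne.
have SY' := orbA_strict oY'.
have Sg1' : Stab k.+1 Y' g1 by apply: Stab_ag SAk1 SY' (ag_sym agY'1) Sg1.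
have S1 : Stab k Y' g1 by exact: Stab_mono.
have B1 : inB g1 by case: Sg1.
have Hs : exists g0, Stab k Y' g0 /\ g0 i i != g0 j j by exists g1; split => //; apply/eqP.
have Y'p : Y' i j = As k.+1 i j by rewrite Y'high.
move: vnz Y'p; set v := As k.+1 i j => vnz Y'p.
have g1v : conjm g1 Y' i j = v by rewrite (Sg1'.2 (i, j) puE) /= ?pk.
have gjj := diag_nz j B1.
have gii := diag_nz i B1.
set r := g1 i i * invmx g1 j j.
have rE : r = g1 i i / g1 j j by rewrite /r diag_inv.
have r1 : r != 1.
  rewrite rE; apply/eqP => E'; apply: ne.
  by rewrite -(divfK gjj (g1 i i)) E' mul1r.
have r0 : r != 0 by rewrite rE mulf_neq0 ?invr_eq0.
have full : forall y, orbit_vals As k (i, j) y.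
  move=> y; apply/(Vchar oY' agY').
  case: (eqVneq y (v * (1 - r))) => [ey|ney].
    have tnz : y / v != 0.
      rewrite ey; apply: mulf_neq0; last by rewrite invr_eq0.
      by apply: mulf_neq0 => //; rewrite subr_eq0 eq_sym.
    have [dt [dtnz di dj Sd]] := scale oY' agY' Hs tnz.
    exists (dg dt); split => //; rewrite dg_conj //= di dj Y'p invr1 mulr1.
    by rewrite divfK.
  pose t := 1 + (y - v) / (v * r).
  have tnz : t != 0.
    apply: contra ney => /eqP t0; apply/eqP.
    have : (y - v) / (v * r) = -1.
      by rewrite -(addKr 1 ((y - v) / (v * r))) -/t t0 addr0.
    move/(congr1 (fun z => z * (v * r))); rewrite divfK; last by apply: mulf_neq0.
    move=> E'.
    by rewrite mulrBr mulr1 -[y](subrK v) E'; ring.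
  have [dt [dtnz di dj Sd]] := scale oY' agY' Hs tnz.
  exists (g1 *m dg dt); split; first exact: Stab_mul SY' S1 Sd.
  have Bd : inB (dg dt) by case: Sd.
  rewrite conjmM; [|by case: B1|by case: Bd].
  have := ag_conj_p B1 (conj_strict Bd SY') SY' Sd.2 puE pk.
  rewrite /= g1v dg_conj //= di dj Y'p invr1 mulr1 -/r => E'.
  have -> : conjm g1 (conjm (dg dt) Y') i j = v + g1 i i * (t * v - v) * invmx g1 j j.
    by rewrite -E' addrC subrK.
  rewrite mulrAC -/r /t; field.
  by rewrite r0 vnz.
have [Ra _ _] := rule.
by move: vnz; rewrite /v Ra ?eqxx //; right.
Qed.

End Pos.

End Step.

Lemma step_all k : (k < npos n)%N -> Inv k -> IHk k -> Inv k.+1 /\ IHk k.+1.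
Proof.
move=> kn [Y [QY oY agY]] IH.
case: (classic (exists p : 'I_n * 'I_n, p \in upos n /\ brank p = k)) => [[[i j] [pu pk]]|np].
  rewrite uposE /= in pu.
  case: (classic (zreg Q i j)) => [za|nza]; first exact: (stepA kn IH pu pk QY oY agY za).
  have [b nzb] : exists b, ~ (Q i b != 0 -> (j < b)%N).
    by apply: not_all_ex_not.
  have [nz jb] : Q i b != 0 /\ ~~ (j < b)%N.
    split; first by apply/negP => E; apply: nzb => H; rewrite E in H.
    by apply/negP => jb; apply: nzb.
  rewrite -leqNgt leq_eqVlt in jb; case/orP: jb => [/eqP bj|bj].
    by apply: (stepB kn IH pu pk QY oY agY); rewrite -(val_inj bj).
  exact: (stepC kn IH pu pk QY oY agY nz bj).
have notk : forall q, q \in upos n -> (brank q < k.+1)%N -> (brank q < k)%N.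
  move=> q qu; rewrite ltnS leq_eqVlt => /orP[/eqP E|//].
  by case: np; exists q.
split.
  exists Y; split => // q qu qk.
  by rewrite (agY _ qu (notk _ qu qk)) (ag_next kn qu (notk _ qu qk)).
move=> g Sg q qu qk nz.
have Sg' : Stab k (As k) g.
  exact: Stab_ag (SAk1 kn) (SAk kn) (ag_next kn) (Stab_mono Sg).
by apply: (IH _ Sg' _ qu (notk _ qu qk)); rewrite -(ag_next kn qu (notk _ qu qk)).
Qed.

Lemma inv_all k : (k <= npos n)%N -> Inv k /\ IHk k.
Proof.
elim: k => [_|k IHk' kn].
  split; last by move=> g _ q _.
  exists A; split; [exact: QA | by exists 1%:M; split; [exact: inB1 | rewrite conjm1] | by move=> q _].
have [I1 I2] := IHk' (ltnW kn).
exact: step_all.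
Qed.

Lemma final_QU : QUs Q (As (npos n)) /\ orbA (As (npos n)).
Proof.
have [[Y [QY oY agY]] _] := inv_all (leqnn (npos n)).
have [SAn oAn _] := run_props SA run (leqnn (npos n)).
suff <- : Y = As (npos n) by [].
apply/matrixP => r c; case: (ltnP r c) => rc.
  have ru : (r, c) \in upos n by rewrite uposE.
  exact: (agY _ ru (brank_npos ru)).
by rewrite (orbA_strict oY) // SAn.
Qed.

End Main.

Section Ops.
Variables (F : fieldType) (n : nat) (Q : 'M[F]_n).
Local Notation M := 'M[F]_n.
Implicit Types (X Y Z g h : M).
Hypothesis SQ : strict_upper Q.
Hypothesis PQ : subpermutation Q.

Lemma entM' (P R : M) (a b : 'I_n) : (P *m R) a b = \sum_c P a c * R c b.
Proof. by rewrite mxE. Qed.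

Lemma rowop_conj_full (i : 'I_n) (w : 'I_n -> F) (t : F) Y :
  (forall a : 'I_n, (a <= i)%N -> w a = 0) -> strict_upper Y ->
  forall r c : 'I_n,
  conjm (1%:M + t *: rowW i w) Y r c =
    Y r c + (r == i)%:R * t * \sum_a w a * Y a c - t * (Y r i * w c).
Proof.
move=> wi SY r c; rewrite /conjm (inv_uniq (rowop_inv t wi)).
set W := rowW i w.
have E1 : (Y *m W) r c = Y r i * w c.
  rewrite mxE (bigD1 i) //= big1 ?addr0; first by rewrite mxE eqxx mul1r.
  by move=> b ne; rewrite mxE (negPf ne) mul0r mulr0.
have E2 : (W *m Y *m W) r c = 0.
  rewrite mxE big1 // => b _; rewrite !mxE.
  case: (eqVneq b i) => [->|ne]; last by rewrite ?(negPf ne) mul0r mulr0.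
  rewrite big1 ?mul0r // => a _; rewrite mxE.
  case: (leqP a i) => ai; first by rewrite wi ?mulr0 ?mul0r.
  by rewrite SY ?mulr0 // ltnW.
have E3 : (W *m Y) r c = (r == i)%:R * \sum_a w a * Y a c.
  by rewrite mxE mulr_sumr; apply: eq_bigr => a _; rewrite mxE mulrA.
rewrite mulmxBr mulmx1 mulmxDl mul1mx mulmxDl -!scalemxAl -!scalemxAr scalerA.
rewrite !(entD, entN, entZ) E1 E2 E3 mulr0 addr0 mulrA [t * _]mulrC.
by [].
Qed.

Definition Padm (a c : 'I_n) :=
  (forall b, Q c b = 0) \/ exists b b', [/\ Q a b != 0, Q c b' != 0 & (b < b')%N].

Lemma elem_delta (a c : 'I_n) (lam : F) :
  1%:M + lam *: delta_mx a c = 1%:M + lam *: rowW a (fun b => (b == c)%:R) :> M.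
Proof.
apply/matrixP => r c'; rewrite !mxE.
by case: (r == a); case: (c' == c); rewrite ?mul1r ?mul0r ?mulr1 ?mulr0.
Qed.

Lemma elem_QUs X (a c : 'I_n) (lam : F) : QUs Q X -> (a < c)%N ->
  lam = 0 \/ Padm a c -> QUs Q (elem_op a c lam X).
Proof.
move=> QX ac H.
have SX := QUs_strict SQ QX.
have wi : forall b : 'I_n, (b <= a)%N -> (fun b => (b == c)%:R) b = 0 :> F.
  by move=> b ba /=; rewrite (ord_ltF (leq_ltn_trans ba ac)).
have E : forall r c', elem_op a c lam X r c' =
    X r c' + (r == a)%:R * lam * X c c' - lam * (X r a * (c' == c)%:R).
  move=> r c'; rewrite /elem_op elem_delta rowop_conj_full //.
  have -> : \sum_a0 (a0 == c)%:R * X a0 c' = X c c'.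
    rewrite (bigD1 c) //= eqxx mul1r big1 ?addr0 //.
    by move=> b ne; rewrite (negPf ne) mul0r.
  by [].
have key1 : forall c' : 'I_n, (forall b, Q a b != 0 -> (c' <= b)%N) -> lam * X c c' = 0.
  move=> c' z; case: H => [->|[Hc|[b [b' [nb nb' bb']]]]]; first by rewrite mul0r.
    by case: QX => Z1 _; rewrite Z1 ?mulr0 // => b; rewrite Hc eqxx.
  case: QX => Z1 _; rewrite Z1 ?mulr0 //; apply/(zregE PQ _ nb').
  exact: leq_ltn_trans (z b nb) bb'.
have key2 : forall r, zreg Q r c -> X r a = 0.
  move=> r z; case: QX => Z1 _; apply: Z1 => b nb; exact: ltn_trans ac (z b nb).
case: QX => Z1 L1; split.
  move=> r c' z; rewrite E Z1 //.
  have t2 : (r == a)%:R * lam * X c c' = 0.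
    case ra: (r == a); last by rewrite !mul0r.
    move/eqP: ra => ra; rewrite mul1r key1 // => b nb; apply: ltnW; apply: z.
    by rewrite ra.
  have t3 : X r a * (c' == c)%:R = 0.
    case cc: (c' == c); last by rewrite mulr0.
    by move/eqP: cc => cc; rewrite key2 ?mul0r // -cc.
  by rewrite t2 t3 mulr0 add0r subr0.
move=> r b nb; rewrite E L1 //.
have t3 : X r a * (b == c)%:R = 0.
  case bc: (b == c); last by rewrite mulr0.
  by move/eqP: bc => bc; rewrite Z1 ?mul0r //; apply/(zregE PQ _ nb); rewrite bc.
rewrite t3 mulr0 subr0.
case ra: (r == a); first last.
  by rewrite !mul0r addr0.
move/eqP: ra => ra; rewrite mul1r key1 ?addr0 //.
by move=> b' nb'; rewrite -ra in nb'; rewrite (Qrow PQ nb' nb).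
Qed.

Lemma admissible A' u : QUs Q A' -> upper_tri u -> (forall c, u c c = 1) ->
  (forall a c', zreg Q a c' -> conjm u A' a c' = 0) ->
  forall a c : 'I_n, (a < c)%N -> u a c != 0 -> Padm a c.
Proof.
move=> QA' Uu du Zz a c ac nz.
have uu : u \in unitmx by rewrite unit_upper //; apply/forallP => x; rewrite du oner_neq0.
pose w (b : 'I_n) := if (a < b)%N then u a b else 0.
have hrow : forall c' : 'I_n, zreg Q a c' -> \sum_b w b * A' b c' = 0.
  move=> c' z; have := congr1 (fun m : M => m a c') (conj_rel A' uu).
  rewrite !entM' big1; last first.
    move=> b _; case: (leqP b c') => bc; last by rewrite Uu ?mulr0.
    rewrite Zz ?mul0r // => b' nb; exact: leq_ltn_trans bc (z b' nb).
  rewrite (bigD1 a) //= du mul1r.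
  case: QA' => Z1 _; rewrite Z1 // add0r => E; apply: (etrans _ (esym E)).
  rewrite (bigD1 a) //= /w ltnn mul0r add0r; apply: eq_bigr => b ne.
  case: ltnP => // ba; rewrite Uu ?mul0r //.
  by rewrite ltn_neqAle ba andbT; apply: contra ne => /eqP/val_inj ->.
have wc : w c = u a c by rewrite /w ac.
case: (classic (forall b, Q c b = 0)) => [H|H]; first by left.
have [b' nb'] : exists b', Q c b' != 0.
  apply: NNPP => H'; apply: H => b; apply/eqP; apply: NNPP => nb; apply: H'.
  by exists b; apply/negP.
right.
case: (classic (exists s, Q a s != 0)) => [[s ns]|H'].
  exists s, b'; split => //.
  case: (ltngtP s b') => // [bs|/val_inj E].
    have := @echelon F n Q PQ w A' s QA' _ c b' nb' bs.
    rewrite wc => /(_ _)/eqP; rewrite (negPf nz) => H0; exfalso.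
    have : false; last by [].
    apply: H0 => c'' cs; apply: hrow => b nb.
    by rewrite -(Qrow PQ ns nb).
  by rewrite -E in nb'; have E' := Qcol PQ ns nb'; rewrite E' ltnn in ac.
exfalso.
have za : forall c' : 'I_n, zreg Q a c'.
  by move=> c' b nb; case: H'; exists b.
have := @echelon F n Q PQ w A' n QA' (fun c'' _ => hrow c'' (za c'')) c b' nb' (ltn_ord b').
by rewrite wc => E; rewrite E eqxx in nz.
Qed.

Lemma prefix_QUs (ops : seq ('I_n * 'I_n * F)) X :
  (forall o, o \in ops -> (o.1.1 < o.1.2)%N /\ (o.2 = 0 \/ Padm o.1.1 o.1.2)) ->
  QUs Q X -> forall k, QUs Q (apply_ops (take k ops) X).
Proof.
elim: ops X => [|o ops IH] X H QX k; first by [].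

case: k => [|k] //=.
have [oa op] := H o (mem_head _ _).
apply: IH; last exact: elem_QUs.
by move=> o' o'in; apply: H; rewrite in_cons o'in orbT.
Qed.

Definition nzs (u : M) : {set 'I_n * 'I_n} := [set p : 'I_n * 'I_n | (p.1 < p.2)%N && (u p.1 p.2 != 0)].

Lemma unit_unip (u : M) : upper_tri u -> (forall c, u c c = 1) -> u \in unitmx.
Proof. by move=> Uu du; rewrite unit_upper //; apply/forallP => x; rewrite du oner_neq0. Qed.

Lemma elem_unit (a c : 'I_n) lam : (a < c)%N -> (1%:M + lam *: delta_mx a c : M) \in unitmx.
Proof.
move=> ac; rewrite elem_delta.
have wi : forall b : 'I_n, (b <= a)%N -> (fun b => (b == c)%:R) b = 0 :> F.
  by move=> b ba /=; rewrite (ord_ltF (leq_ltn_trans ba ac)).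
by case: (rowop_inB lam wi).
Qed.

Lemma decomp N : forall u : M, (#|nzs u| <= N)%N -> upper_tri u -> (forall c, u c c = 1) ->
  exists ops : seq ('I_n * 'I_n * F),
    (forall o, o \in ops -> [/\ (o.1.1 < o.1.2)%N, u o.1.1 o.1.2 = o.2 & o.2 != 0]) /\
    forall X, apply_ops ops X = conjm u X.
Proof.
elim: N => [|N IH] u cu Uu du.
  have u1 : u = 1%:M.
    apply/matrixP => r c; rewrite mxE; case: (ltngtP r c) => [rc|cr|/val_inj ->].
    - rewrite (ord_ltF rc); apply/eqP; apply: contraT => nz.
      have : (r, c) \in nzs u by rewrite inE /= rc nz.
      by move: cu; rewrite leqn0 => /eqP/card0_eq ->.
    - by rewrite (ord_gtF cr) Uu.
    - by rewrite eqxx du.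
  by exists [::]; split => // X; rewrite u1 conjm1.
case: (posnP #|nzs u|) => [c0|cpos].
  by apply: IH; rewrite ?c0.
have [[a c] pin pmax] := eq_bigmax_cond (fun p : 'I_n * 'I_n => val p.1) cpos.
rewrite inE /= in pin; case/andP: pin => ac nz.
have below : forall r c'' : 'I_n, (a < r)%N -> (r < c'')%N -> u r c'' = 0.
  move=> r c'' ar rc; apply/eqP; apply: contraT => nz'.
  have : (val r <= \max_(p in nzs u) val p.1)%N.
    have H := @leq_bigmax_cond _ (fun p => p \in nzs u) (fun p : 'I_n * 'I_n => val p.1) (r, c''); apply: H. by rewrite /nzs inE /= rc nz'.
  by rewrite pmax /= leqNgt ar.
pose u' := u - u a c *: delta_mx a c.
have u'E : forall r c'', u' r c'' = u r c'' - u a c * ((r == a) && (c'' == c))%:R.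
  by move=> r c''; rewrite !mxE.
have Uu' : upper_tri u'.
  move=> r c'' cr; rewrite u'E Uu //.
  case: (eqVneq r a) => [ra|]; last by rewrite mulr0 subr0.
  case: (eqVneq c'' c) => [cc|]; last by rewrite andbF mulr0 subr0.
  by rewrite ra cc in cr; rewrite ltnNge (ltnW ac) in cr.
have du' : forall x, u' x x = 1.
  move=> x; rewrite u'E du; case: (eqVneq x a) => [xa|]; last by rewrite mulr0 subr0.
  rewrite xa; case: (eqVneq a c) => [E|]; last by rewrite andbF mulr0 subr0.
  by rewrite E ltnn in ac.
have sub : nzs u' \proper nzs u.
  apply/properP; split.
    apply/subsetP => [[r c'']]; rewrite !inE /= => /andP[rc nz']; rewrite rc /=.
    move: nz'; rewrite u'E; case: (eqVneq r a) => [ra|_]; last by rewrite mulr0 subr0.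
    case: (eqVneq c'' c) => [cc|_]; last by rewrite andbF mulr0 subr0.
    by rewrite ra cc mulr1 subrr eqxx.
  exists (a, c); first by rewrite inE /= ac nz.
  by rewrite inE /= u'E !eqxx mulr1 subrr eqxx andbF.
have cu' : (#|nzs u'| <= N)%N by rewrite -ltnS (leq_trans (proper_card sub) cu).
have [ops' [Hops' Eops']] := IH u' cu' Uu' du'.
exists (rcons ops' (a, c, u a c)); split.
  move=> o; rewrite mem_rcons in_cons => /orP[/eqP ->|oin]; first by split.
  have [o1 o2 o3] := Hops' o oin; split => //.
  move: o2; rewrite u'E; case: (eqVneq o.1.1 a) => [oa|_]; last by rewrite mulr0 subr0.
  case: (eqVneq o.1.2 c) => [oc|_]; last by rewrite andbF mulr0 subr0.
  by move=> E; rewrite oa oc mulr1 subrr in E; rewrite -E eqxx in o3.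
move=> X; rewrite /apply_ops foldl_rcons -/(apply_ops ops' X) Eops' /elem_op /=.
rewrite -conjmM ?elem_unit ?unit_unip //.
congr conjm.
rewrite mulmxDl mul1mx -scalemxAl.
have -> : delta_mx a c *m u' = delta_mx a c.
  apply/matrixP => r c''; rewrite mxE (bigD1 c) //= big1 ?addr0; last first.
    by move=> b ne; rewrite mxE (negPf ne) andbF mul0r.
  rewrite mxE eqxx andbT [delta_mx a c r c'']mxE.
  case: (r == a); rewrite ?mul0r //= mul1r.
  case: (ltngtP c c'') => [cc|cc|/val_inj ->]; last by rewrite du' eqxx.
  - by rewrite (ord_gtF cc) u'E below // (ord_gtF ac) /= mulr0 subr0.
  - by rewrite Uu' // (ord_ltF cc).
by rewrite /u' subrK.
Qed.

End Ops.

Unset Implicit Arguments.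
Set Strict Implicit.

Theorem theorem2p16 (F : fieldType) (n : nat) (Q A Ainf : 'M[F]_n) :
  strict_upper Q -> subpermutation Q -> inQU Q A ->
  belitskii_form A Ainf ->
  inQU Q Ainf /\
  exists ops : seq ('I_n * 'I_n * F),
    (forall o, o \in ops -> (o.1.1 < o.1.2)%N) /\
    (forall k, (k <= size ops)%N -> inQU Q (apply_ops (take k ops) A)) /\
    exists D, inD D /\ apply_ops ops A = conjm D Ainf.
Proof.
move=> SQ PQ QA [As [run ->]].
have QA' := inQU_QUs PQ QA.
have [QAn [h [Bh Eh]]] := final_QU SQ PQ QA' run.
split; first by move: (QUs_inQU PQ QAn).
have hnz : forall c, h c c != 0 by move=> c; apply: (diag_nz c Bh).
have hinz : forall c, (h c c)^-1 != 0 by move=> c; rewrite invr_eq0.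
set dl := dg (fun c => h c c).
set D := dg (fun c => (h c c)^-1).
have Bdl : inB dl by exact: dg_inB.
have udl : dl \in unitmx by case: Bdl.
have iD : invmx dl = D by rewrite /dl dg_inv.
set u := D *m h.
have uE : forall r c, u r c = (h r r)^-1 * h r c.
  by move=> r c; rewrite /u /D /dg mul_diag_mx !mxE.
have Uu : upper_tri u.
  have Uh : upper_tri h by case: Bh. by move=> r c cr; rewrite uE (Uh r c cr) mulr0.
have du : forall c, u c c = 1 by move=> c; rewrite uE mulVf.
have hE : h = dl *m u by rewrite /u -iD mulKVmx.
have uu : u \in unitmx by apply: (unit_unip Uu du).
have Cu : conjm u A = conjm D (As (npos n)).
  by rewrite Eh hE conjmM // -iD conjmK.
have Zz : forall a c', zreg Q a c' -> conjm u A a c' = 0.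
  move=> a c' z; rewrite Cu /D dg_conj //; case: QAn => Z1 _.
  by rewrite Z1 // mulr0 mul0r.
have [ops [Hops Eops]] := decomp (leqnn #|nzs u|) Uu du.
exists ops; split.
  by move=> o oin; have [] := Hops o oin.
split.
  move=> k _; apply: (@QUs_inQU F n Q PQ); apply: prefix_QUs => // o oin.
  have [o1 o2 o3] := Hops o oin; split => //; right.
  by apply: (admissible PQ QA' Uu du Zz o1); rewrite o2.
exists D; split; last by rewrite Eops Cu.
split; first exact: dg_diag.
by case: (dg_inB hinz).
Qed.
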